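(* Let $\Sigma=\{a,b\}$ with the discrete topology, and let $B$ send a topology $\tau$ on $\Sigma^*$ to the topology generated by the sets $UV$ with $U\subseteq\Sigma$ and $V\in\tau$. Then $B$ is a refinement function over $\Sigma^*$.
   Context: $UV=\{uv:u\in U,v\in V\}$ (concatenation). A topological space is Noetherian if every subset is compact. A refinement function over a set $X$ is a map $R$ from topologies on $X$ to topologies on $X$ that is monotone for inclusion ($\tau\subseteq\tau'\Rightarrow R(\tau)\subseteq R(\tau')$) and sends Noetherian topologies to Noetherian topologies. *)

(* Defs.v *)
From Stdlib Require Import List.
Import ListNotations.

Section Topo.
Variable X : Type.

Definition subset (A B : X -> Prop) : Prop := forall x, A x -> B x.

Definition fam_subset (F G : (X -> Prop) -> Prop) : Prop := forall U, F U -> G U.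

Definition bigunion (F : (X -> Prop) -> Prop) : X -> Prop :=
  fun x => exists U, F U /\ U x.

Definition is_topology (tau : (X -> Prop) -> Prop) : Prop :=
  tau (fun _ => True) /\
  (forall F, fam_subset F tau -> tau (bigunion F)) /\
  (forall U V, tau U -> tau V -> tau (fun x => U x /\ V x)).

Definition compact_in (tau : (X -> Prop) -> Prop) (S : X -> Prop) : Prop :=
  forall F, fam_subset F tau -> subset S (bigunion F) ->
  exists l : list (X -> Prop),
    (forall U, In U l -> F U) /\
    subset S (fun x => exists U, In U l /\ U x).

Definition noetherian (tau : (X -> Prop) -> Prop) : Prop :=
  forall S, compact_in tau S.

Definition generated (G : (X -> Prop) -> Prop) : (X -> Prop) -> Prop :=
  fun U => forall t, is_topology t -> fam_subset G t -> t U.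

Definition is_refinement_function
  (R : ((X -> Prop) -> Prop) -> ((X -> Prop) -> Prop)) : Prop :=
  (forall tau, is_topology tau -> is_topology (R tau)) /\
  (forall tau tau', is_topology tau -> is_topology tau' ->
     fam_subset tau tau' -> fam_subset (R tau) (R tau')) /\
  (forall tau, is_topology tau -> noetherian tau -> noetherian (R tau)).
End Topo.

Arguments subset {X}.
Arguments fam_subset {X}.
Arguments bigunion {X}.
Arguments is_topology {X}.
Arguments compact_in {X}.
Arguments noetherian {X}.
Arguments generated {X}.
Arguments is_refinement_function {X}.

Inductive letter : Type := la | lb.
Definition word := list letter.

(* Concatenation UV for U a set of letters (= words of length 1) and V a set of words. *)
Definition concat_letters (U : letter -> Prop) (V : word -> Prop) : word -> Prop :=
  fun w => exists x v, U x /\ V v /\ w = x :: v.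

(* B tau = topology generated by the sets UV, U ⊆ Sigma (any subset: Sigma is
   discrete), V ∈ tau. *)
Definition Bfun (tau : (word -> Prop) -> Prop) : (word -> Prop) -> Prop :=
  generated (fun W => exists (U : letter -> Prop) (V : word -> Prop),
                 tau V /\ W = concat_letters U V).

(* Main.v *)
Require Import Defs.
From Stdlib Require Import List Classical FunctionalExtensionality PropExtensionality.
Import ListNotations.

Lemma generated_top {X} (G : (X -> Prop) -> Prop) : is_topology (generated G).
Proof.
  split; [|split].
  - intros t [Ht _] _; exact Ht.
  - intros F HF t Ht HG. destruct Ht as [H1 [H2 H3]]. apply H2.
    intros U HU. apply (HF U HU t); [split; [|split]|]; auto.
  - intros U V HU HV t Ht HG. destruct Ht as [H1 [H2 H3]]. apply H3.
    + apply HU; [split; [|split]|]; auto.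
    + apply HV; [split; [|split]|]; auto.
Qed.

Definition resid (x : letter) (W : word -> Prop) : word -> Prop := fun v => W (x :: v).

Lemma B_resid tau : is_topology tau -> forall W, Bfun tau W -> forall x, tau (resid x W).
Proof.
  intros Htau W HW.
  destruct Htau as [T1 [T2 T3]].
  apply (HW (fun W => forall x, tau (resid x W))).
  - split; [|split].
    + intros x; exact T1.
    + intros F HF x.
      replace (resid x (bigunion F)) with
        (bigunion (fun V => exists W, F W /\ V = resid x W)).
      * apply T2. intros V [W1 [HFW ->]]. apply HF, HFW.
      * apply functional_extensionality; intros v; apply propositional_extensionality.
        unfold bigunion, resid; split.
        -- intros [V [[W1 [HFW ->]] HV]]; eauto.
        -- intros [W1 [HFW HW']]; exists (resid x W1); split; eauto.
    + intros U V HU HV x. apply (T3 _ _ (HU x) (HV x)).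
  - intros W0 [U [V [HV ->]]] x.
    destruct (classic (U x)) as [Hx|Hx].
    + replace (resid x (concat_letters U V)) with V; auto.
      apply functional_extensionality; intros v; apply propositional_extensionality.
      unfold resid, concat_letters; split.
      * intros Hv; exists x, v; auto.
      * intros [y [v' [_ [Hv' He]]]]; injection He; intros; subst; auto.
    + replace (resid x (concat_letters U V)) with (bigunion (fun _ : word -> Prop => False)).
      * apply T2; intros ? [].
      * apply functional_extensionality; intros v; apply propositional_extensionality.
        unfold resid, concat_letters, bigunion; split.
        -- intros [? [[] _]].
        -- intros [y [v' [Hy [_ He]]]]; injection He; intros; subst; contradiction.
Qed.

Lemma lift_list (F : (word -> Prop) -> Prop) x (l : list (word -> Prop)) :
  (forall U, In U l -> exists W, F W /\ U = resid x W) ->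
  exists l', (forall W, In W l' -> F W) /\
    forall v, (exists U, In U l /\ U v) -> exists W, In W l' /\ W (x :: v).
Proof.
  induction l as [|U l IH]; intros H.
  - exists []; split; [intros W []|intros v [U [[] _]]].
  - destruct (H U (or_introl eq_refl)) as [W [HW ->]].
    destruct IH as [l' [H1 H2]]; [intros; apply H; simpl; auto|].
    exists (W :: l'); split.
    + intros W' [<-|Hin]; auto.
    + intros v [U' [[<-|Hin] HU]].
      * exists W; simpl; auto.
      * destruct (H2 v (ex_intro _ U' (conj Hin HU))) as [W' [? ?]].
        exists W'; simpl; auto.
Qed.

Theorem mainTheorem8 : is_refinement_function Bfun.
Proof.
  split; [|split].
  - intros tau _; apply generated_top.
  - intros tau tau' _ _ Hs W HW t Ht HG. apply HW; auto.
    intros V [U [V' [HV' ->]]]. apply HG. exists U, V'; auto.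
  - intros tau Htau Hn S F HF HS.
    assert (Hx : forall x, exists l', (forall W, In W l' -> F W) /\
       forall v, S (x :: v) -> exists W, In W l' /\ W (x :: v)).
    { intros x.
      destruct (Hn (fun v => S (x :: v)) (fun V => exists W, F W /\ V = resid x W))
        as [l [Hl1 Hl2]].
      - intros V [W [HW ->]]. apply B_resid; auto.
      - intros v Hv. destruct (HS _ Hv) as [W [HW Hw]].
        exists (resid x W); split; eauto.
      - destruct (lift_list F x l Hl1) as [l' [H1 H2]].
        exists l'; split; auto. }
    destruct (Hx la) as [la' [Ha1 Ha2]].
    destruct (Hx lb) as [lb' [Hb1 Hb2]].
    assert (H0 : exists l0, (forall W, In W l0 -> F W) /\
              (S [] -> exists W, In W l0 /\ W [])).
    { destruct (classic (S [])) as [H|H].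
      - destruct (HS _ H) as [W [HW Hw]]. exists [W]; split.
        + intros W' [<-|[]]; auto.
        + intros _; exists W; simpl; auto.
      - exists []; split; [intros ? []|intros; contradiction]. }
    destruct H0 as [l0 [H01 H02]].
    exists (l0 ++ la' ++ lb'); split.
    + intros W Hin. apply in_app_or in Hin as [Hin|Hin]; auto.
      apply in_app_or in Hin as [Hin|Hin]; auto.
    + intros [|[|] v] Hw.
      * destruct (H02 Hw) as [W [? ?]]; exists W; split; auto; apply in_or_app; auto.
      * destruct (Ha2 v Hw) as [W [? ?]]; exists W; split; auto;
          apply in_or_app; right; apply in_or_app; auto.
      * destruct (Hb2 v Hw) as [W [? ?]]; exists W; split; auto;
          apply in_or_app; right; apply in_or_app; auto.
Qed.
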